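(* Let $q(x)\in\mathbb{Z}[x]$ be a monic polynomial of degree $g$ whose coefficient of $x^{g-1}$ is nonzero, and let $\mathrm{sym}(q)(x)=x^{g}\,q\!\left(x+\frac1x\right)$. Then $\mathrm{sym}(q)(x)$ is not a polynomial in $x^k$ for any integer $k>1$. *)

(* Defs.v *)
From mathcomp Require Import all_boot all_order all_algebra.
Set Implicit Arguments. Unset Strict Implicit. Unset Printing Implicit Defensive.
Import GRing.Theory.
Local Open Scope ring_scope.

(* sym(q)(x) = x^g q(x + 1/x), with g = deg q.  Writing q = sum_i q_i x^i,
   x^g q(x + 1/x) = sum_{i<=g} q_i (x^2+1)^i x^(g-i), a polynomial in x. *)
Definition sym (q : {poly int}) : {poly int} :=
  \sum_(i < size q) q`_i *: (('X ^+ 2 + 1) ^+ i * 'X ^+ ((size q).-1 - i)).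

Definition is_poly_in_Xk (k : nat) (p : {poly int}) : Prop :=
  exists r : {poly int}, p = r \Po 'X ^+ k.

(* Main.v *)
Require Import Defs.
From mathcomp Require Import all_boot all_order all_algebra.
From mathcomp Require Import zify.
Import GRing.Theory.
Local Open Scope ring_scope.

Lemma PE (i : nat) : (('X ^+ 2 + 1) ^+ i : {poly int}) = ('X + 1) ^+ i \Po 'X ^+ 2.
Proof.
by rewrite rmorphXn /= comp_polyD comp_polyX comp_polyC.
Qed.

Lemma P_odd (i n : nat) : odd n -> ((('X ^+ 2 + 1) ^+ i : {poly int}))`_n = 0.
Proof.
move=> on; rewrite PE coef_comp_poly_Xn // dvdn2 on //.
Qed.

Lemma P_monic (i : nat) : (('X ^+ 2 + 1) ^+ i : {poly int}) \is monic.
Proof.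
apply: monic_exp; rewrite -[1]/(1%:P); by apply: monicXnaddC.
Qed.

Lemma P_size (i : nat) : size (('X ^+ 2 + 1) ^+ i : {poly int}) = (2 * i).+1.
Proof.
have h := size_exp ('X ^+ 2 + 1 : {poly int}) i.
have s2 : size ('X ^+ 2 + 1 : {poly int}) = 3%N by rewrite -[1]/(1%:P) size_XnaddC.
rewrite s2 /= in h.
have nz : (('X ^+ 2 + 1) ^+ i : {poly int}) != 0 by apply: monic_neq0; apply: P_monic.
rewrite -h prednK // size_poly_gt0 //.
Qed.

Lemma P_lead (i : nat) : (('X ^+ 2 + 1) ^+ i : {poly int})`_(2 * i) = 1.
Proof.
have := P_monic i; move/monicP; rewrite lead_coefE => <-; by congr nth; rewrite P_size.
Qed.

Theorem lemma3p3 (q : {poly int}) (g : nat) : (0 < g)%N ->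
  q \is monic -> size q = g.+1 -> q`_g.-1 != 0 ->
  forall k : nat, (1 < k)%N -> ~ is_poly_in_Xk k (sym q).
Proof.
case: g => [//|g] _ mq sq qg k k1 [r hr].
have q1 : q`_g.+1 = 1 by move/monicP: mq; rewrite lead_coefE sq.
have small : forall n (i : 'I_g), (2 * g.+1 - 1 <= n)%N ->
    (q`_i *: (('X ^+ 2 + 1) ^+ i * 'X ^+ (g.+1 - i)))`_n = 0.
  move=> n i hn; rewrite coefZ coefMXn.
  case: ifP => _; first by rewrite mulr0.
  have -> : (('X ^+ 2 + 1) ^+ i : {poly int})`_(n - (g.+1 - i)) = 0.
    by apply: nth_default; rewrite P_size; have := ltn_ord i; lia.
  by rewrite mulr0.
have cs : forall n : nat, (2 * g.+1 - 1 <= n)%N -> (sym q)`_n =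
   q`_g * (('X ^+ 2 + 1) ^+ g * 'X ^+ 1)`_n + (('X ^+ 2 + 1) ^+ g.+1)`_n.
  move=> n hn; rewrite /sym sq coef_sum /= !big_ord_recr /= big1 => [|i _]; last exact: (small n i hn).
  rewrite add0r !coefZ q1 mul1r subnn expr0 mulr1.
  by rewrite subSnn.
have e1 : (sym q)`_(2 * g).+1 = q`_g.
  rewrite cs; last by lia.
  rewrite coefMXn /= subn1 /= P_lead mulr1 P_odd ?addr0 //.
  by rewrite oddS oddM.
have e2 : (sym q)`_(2 * g.+1) = 1.
  rewrite cs; last by lia.
  rewrite coefMXn.
  have -> : (2 * g.+1 < 1)%N = false by lia.
  have -> : (2 * g.+1 - 1 = (2*g).+1)%N by lia.
  rewrite P_odd ?mulr0 ?add0r ?P_lead //.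
  by rewrite oddS oddM.
have k0 : (0 < k)%N by lia.
have d1 : (k %| (2 * g).+1)%N.
  apply/negPn/negP => hd; move: qg; rewrite /= -e1 hr coef_comp_poly_Xn //.
  by rewrite (negbTE hd) eqxx.
have d2 : (k %| 2 * g.+1)%N.
  apply/negPn/negP => hd; move: e2; rewrite hr coef_comp_poly_Xn //.
  by rewrite (negbTE hd) => /eqP; rewrite eq_sym oner_eq0.
move: d2; have -> : (2 * g.+1 = (2 * g).+1 + 1)%N by lia.
rewrite (dvdn_addr _ d1) dvdn1.
by move/eqP => k1'; rewrite k1' in k1.
Qed.
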